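(* Let $\mathbb{T}$ be a partial tableau and let $n$ be an internal node of $\mathbb{T}$. If every child of $n$ is valid, then $n$ is valid.
   Context: Fix a set $\Sigma$ and a countably infinite set $\mathrm{Var}$ of propositional variables. An LTS is $\mathcal T=(\mathcal S,\to)$ with ${\to}\subseteq\mathcal S\times\Sigma\times\mathcal S$; for $K\subseteq\Sigma$ write $s\xrightarrow{K}s'$ if $s\xrightarrow{a}s'$ for some $a\in K$. A valuation is $\mathcal V:\mathrm{Var}\to 2^{\mathcal S}$. Formulas: $\Phi::=Z\mid\neg\Phi\mid\Phi_1\wedge\Phi_2\mid[K]\Phi\mid\nu Z.\Phi$ ($K\subseteq\Sigma$, $Z\in\mathrm{Var}$), well-formed if in each subformula $\nu Z.\Phi$ every free occurrence of $Z$ in $\Phi$ is under an even number of negations. Derived: $\Phi_1\vee\Phi_2=\neg(\neg\Phi_1\wedge\neg\Phi_2)$, $\langle K\rangle\Phi=\neg[K]\neg\Phi$, $\mu Z.\Phi=\neg\nu Z.\neg\Phi[Z:=\neg Z]$. Semantics: $[\![Z]\!]_{\mathcal V}=\mathcal V(Z)$, $[\![\neg\Phi]\!]_{\mathcal V}=\mathcal S\setminus[\![\Phi]\!]_{\mathcal V}$, $[\![\Phi_1\wedge\Phi_2]\!]_{\mathcal V}=[\![\Phi_1]\!]_{\mathcal V}\cap[\![\Phi_2]\!]_{\mathcal V}$, $[\![[K]\Phi]\!]_{\mathcal V}=\{s\mid\forall s'.\ s\xrightarrow{K}s'\Rightarrow s'\in[\![\Phi]\!]_{\mathcal V}\}$,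 $[\![\nu Z.\Phi]\!]_{\mathcal V}=\bigcup\{S'\subseteq\mathcal S\mid S'\subseteq[\![\Phi]\!]_{\mathcal V[Z:=S']}\}$. A formula is in positive normal form if built from $Z,\neg Z,\wedge,\vee,[K],\langle K\rangle,\nu,\mu$ (negation only on variables). Substitution is capture-free. A definition list is a finite sequence $\Delta=(U_1=\Phi_1)\cdots(U_n=\Phi_n)$ of distinct $U_i\in\mathrm{Var}$ and formulas $\Phi_i$ such that no $U_i$ occurs bound in any $\Phi_j$ and $U_j$ is not free in $\Phi_i$ when $i\le j$; $\Delta(U_i)=\Phi_i$, $\mathrm{dom}(\Delta)=\{U_1,\dots,U_n\}$. Valuation extension: $\mathcal V[\varepsilon]=\mathcal V$, $\mathcal V[(U=\Phi)\cdot\Delta]=(\mathcal V[U:=[\![\Phi]\!]_{\mathcal V}])[\Delta]$. A sequent $S\vdash^{\mathcal T}_{\mathcal V,\Delta}\Phi$ consists of $S\subseteq\mathcal S$, a definition list $\Delta$ and a formula $\Phi$ in positive normal form in which every $U\in\mathrm{dom}(\Delta)$ is positive and not bound; its semantics is $[\![\Phi]\!]_{\mathcal V[\Delta]}$, and it is valid iff $S\subseteq[\![\Phi]\!]_{\mathcal V[\Delta]}$. Proof rules (conclusion; premises in order), all with the same $\mathcal T,\mathcal V$: ($\wedge$) $S\vdash_\Delta\Phi_1\wedge\Phi_2$; $S\vdash_\Delta\Phi_1$, $S\vdash_\Delta\Phi_2$. ($\vee$) $S\vdash_\Delta\Phi_1\vee\Phi_2$; $S_1\vdash_\Delta\Phi_1$,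 $S_2\vdash_\Delta\Phi_2$ where $S=S_1\cup S_2$. ($[K]$) $S\vdash_\Delta[K]\Phi$; $S'\vdash_\Delta\Phi$ with $S'=\{s'\mid\exists s\in S.\ s\xrightarrow{K}s'\}$. ($\langle K\rangle$, with witness function $f:S\to\mathcal S$ such that $s\xrightarrow{K}f(s)$ for all $s\in S$) $S\vdash_\Delta\langle K\rangle\Phi$; $f(S)\vdash_\Delta\Phi$. ($\sigma Z$, $\sigma\in\{\mu,\nu\}$) $S\vdash_\Delta\sigma Z.\Phi$; $S\vdash_{\Delta\cdot(U=\sigma Z.\Phi)}U$ with $U$ fresh (not used elsewhere in the tree). (Un) $S\vdash_\Delta U$; $S\vdash_\Delta\Phi[Z:=U]$ where $\Delta(U)=\sigma Z.\Phi$. (Thin) $S\vdash_\Delta\Phi$; $S'\vdash_\Delta\Phi$ where $S\subseteq S'$. A partial tableau is a finite nonempty ordered tree whose nodes are labelled by sequents over fixed $\mathcal T,\mathcal V$, where every internal node is labelled by a rule application (a rule name, together with a witness function in the case of $\langle K\rangle$) such that the node's sequent and its children's sequents (in order) form an instance of that rule, and leaves carry no rule application. A node is valid iff its sequent is valid. *)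

(* Defs.v *)
From Stdlib Require Import List Arith.
Import ListNotations.

Definition var := nat.

Definition set (A : Type) := A -> Prop.
Definition seteq {A : Type} (X Y : set A) : Prop := forall x, X x <-> Y x.
Definition subset {A : Type} (X Y : set A) : Prop := forall x, X x -> Y x.

Section Mu.
Variable Sigma : Type.
Variable St : Type.

Inductive form : Type :=
| FVar : var -> form
| FNeg : form -> form
| FAnd : form -> form -> form
| FBox : set Sigma -> form -> form
| FNu  : var -> form -> form.

(* Substitution of free occurrences of Z by Psi.  It stops at rebinding of Z;
   it is capture-free in every use below. *)
Fixpoint subst (Phi : form) (Z : var) (Psi : form) : form :=
  match Phi with
  | FVar X => if Nat.eqb X Z then Psi else FVar X
  | FNeg a => FNeg (subst a Z Psi)
  | FAnd a b => FAnd (subst a Z Psi) (subst b Z Psi)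
  | FBox K a => FBox K (subst a Z Psi)
  | FNu X a => if Nat.eqb X Z then FNu X a else FNu X (subst a Z Psi)
  end.

Definition FOr (a b : form) : form := FNeg (FAnd (FNeg a) (FNeg b)).
Definition FDia (K : set Sigma) (a : form) : form := FNeg (FBox K (FNeg a)).
Definition FMu (Z : var) (a : form) : form :=
  FNeg (FNu Z (FNeg (subst a Z (FNeg (FVar Z))))).

Fixpoint free_in (U : var) (Phi : form) : Prop :=
  match Phi with
  | FVar X => X = U
  | FNeg a => free_in U a
  | FAnd a b => free_in U a \/ free_in U b
  | FBox _ a => free_in U a
  | FNu X a => X <> U /\ free_in U a
  end.

Fixpoint bound_in (U : var) (Phi : form) : Prop :=
  match Phi with
  | FVar _ => False
  | FNeg a => bound_in U a
  | FAnd a b => bound_in U a \/ bound_in U b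
  | FBox _ a => bound_in U a
  | FNu X a => X = U \/ bound_in U a
  end.

Fixpoint sign_ok (even : bool) (Z : var) (Phi : form) : Prop :=
  match Phi with
  | FVar X => X = Z -> even = true
  | FNeg a => sign_ok (negb even) Z a
  | FAnd a b => sign_ok even Z a /\ sign_ok even Z b
  | FBox _ a => sign_ok even Z a
  | FNu X a => if Nat.eqb X Z then True else sign_ok even Z a
  end.

Definition positive (Z : var) (Phi : form) : Prop := sign_ok true Z Phi.

Fixpoint wf (Phi : form) : Prop :=
  match Phi with
  | FVar _ => True
  | FNeg a => wf a
  | FAnd a b => wf a /\ wf b
  | FBox _ a => wf a
  | FNu Z a => positive Z a /\ wf a
  end.

Inductive pnf : form -> Prop :=
| pnf_var Z : pnf (FVar Z)
| pnf_negvar Z : pnf (FNeg (FVar Z))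
| pnf_and a b : pnf a -> pnf b -> pnf (FAnd a b)
| pnf_or a b : pnf a -> pnf b -> pnf (FOr a b)
| pnf_box K a : pnf a -> pnf (FBox K a)
| pnf_dia K a : pnf a -> pnf (FDia K a)
| pnf_nu Z a : pnf a -> pnf (FNu Z a)
| pnf_mu Z a : pnf a -> pnf (FMu Z a).

Variable trans : St -> Sigma -> St -> Prop.

Definition stepK (K : set Sigma) (s t : St) : Prop :=
  exists a, K a /\ trans s a t.

Definition valuation := var -> set St.

Definition upd (V : valuation) (Z : var) (S : set St) : valuation :=
  fun X => if Nat.eqb X Z then S else V X.

Fixpoint sem (V : valuation) (Phi : form) : set St :=
  match Phi with
  | FVar Z => V Z
  | FNeg a => fun s => ~ sem V a s
  | FAnd a b => fun s => sem V a s /\ sem V b s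
  | FBox K a => fun s => forall t, stepK K s t -> sem V a t
  | FNu Z a => fun s => exists S' : set St,
                  S' s /\ (forall t, S' t -> sem (upd V Z S') a t)
  end.

Definition deflist := list (var * form).

Definition dom (D : deflist) : list var := map fst D.

Fixpoint lookup (D : deflist) (U : var) : option form :=
  match D with
  | [] => None
  | (X, Phi) :: D' => if Nat.eqb X U then Some Phi else lookup D' U
  end.

Definition is_deflist (D : deflist) : Prop :=
  NoDup (dom D) /\
  (forall U Phi, In U (dom D) -> In Phi (map snd D) -> ~ bound_in U Phi) /\
  (forall i j, i <= j -> j < length D ->
     ~ free_in (nth j (dom D) 0) (nth i (map snd D) (FVar 0))) /\
  (forall Phi, In Phi (map snd D) -> wf Phi).

Fixpoint ext (V : valuation) (D : deflist) : valuation :=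
  match D with
  | [] => V
  | (U, Phi) :: D' => ext (upd V U (sem V Phi)) D'
  end.

Record sequent : Type := Seq {
  sq_set : set St;
  sq_defs : deflist;
  sq_form : form }.

Definition is_sequent (q : sequent) : Prop :=
  is_deflist (sq_defs q) /\ pnf (sq_form q) /\ wf (sq_form q) /\
  (forall U, In U (dom (sq_defs q)) ->
     positive U (sq_form q) /\ ~ bound_in U (sq_form q)).

Definition valid (V : valuation) (q : sequent) : Prop :=
  subset (sq_set q) (sem (ext V (sq_defs q)) (sq_form q)).

(* Rule names; the diamond rule carries its witness function. *)
Inductive rule : Type :=
| RAnd | ROr | RBox | RDia (f : St -> St) | RSigma | RUn | RThin.

Definition is_sigma (Psi : form) (Z : var) (a : form) : Prop :=
  Psi = FNu Z a \/ Psi = FMu Z a.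

Inductive rule_inst : rule -> sequent -> list sequent -> Prop :=
| ri_and S D a b S1 S2 :
    seteq S1 S -> seteq S2 S ->
    rule_inst RAnd (Seq S D (FAnd a b)) [Seq S1 D a; Seq S2 D b]
| ri_or S D a b S1 S2 :
    seteq S (fun s => S1 s \/ S2 s) ->
    rule_inst ROr (Seq S D (FOr a b)) [Seq S1 D a; Seq S2 D b]
| ri_box S D K a S' :
    seteq S' (fun t => exists s, S s /\ stepK K s t) ->
    rule_inst RBox (Seq S D (FBox K a)) [Seq S' D a]
| ri_dia S D K a (f : St -> St) S' :
    (forall s, S s -> stepK K s (f s)) ->
    seteq S' (fun t => exists s, S s /\ t = f s) ->
    rule_inst (RDia f) (Seq S D (FDia K a)) [Seq S' D a]
| ri_sigma S D Psi Z a U S' :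
    is_sigma Psi Z a -> seteq S' S ->
    rule_inst RSigma (Seq S D Psi) [Seq S' (D ++ [(U, Psi)]) (FVar U)]
| ri_un S D U Psi Z a S' :
    lookup D U = Some Psi -> is_sigma Psi Z a -> seteq S' S ->
    rule_inst RUn (Seq S D (FVar U)) [Seq S' D (subst a Z (FVar U))]
| ri_thin S D Phi S' :
    subset S S' ->
    rule_inst RThin (Seq S D Phi) [Seq S' D Phi].

Inductive tab : Type :=
| TLeaf : sequent -> tab
| TNode : sequent -> rule -> list tab -> tab.

Definition root (t : tab) : sequent :=
  match t with TLeaf q => q | TNode q _ _ => q end.

Inductive tab_ok : tab -> Prop :=
| ok_leaf q : is_sequent q -> tab_ok (TLeaf q)
| ok_node q r cs : is_sequent q -> rule_inst r q (map root cs) ->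
    Forall tab_ok cs -> tab_ok (TNode q r cs).

Fixpoint node_at (t : tab) (p : list nat) : option tab :=
  match p with
  | [] => Some t
  | i :: p' =>
      match t with
      | TLeaf _ => None
      | TNode _ _ cs =>
          match nth_error cs i with
          | Some c => node_at c p'
          | None => None
          end
      end
  end.

Definition occurs (U : var) (Phi : form) : Prop := free_in U Phi \/ bound_in U Phi.

Definition mentions (U : var) (q : sequent) : Prop :=
  In U (dom (sq_defs q)) \/ occurs U (sq_form q) \/
  (exists Phi, In Phi (map snd (sq_defs q)) /\ occurs U Phi).

(* Freshness for the sigma rule: the new U is not used by any node outside
   the subtree rooted at the premise of that rule application. *)
Definition fresh_ok (T : tab) : Prop :=
  forall p q cs c U Psi,
    node_at T p = Some (TNode q RSigma cs) ->
    cs = [c] ->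
    sq_defs (root c) = sq_defs q ++ [(U, Psi)] ->
    forall p' n', node_at T p' = Some n' ->
      (~ exists p'', p' = (p ++ [0]) ++ p'') ->
      ~ mentions U (root n').

Definition partial_tableau (T : tab) : Prop := tab_ok T /\ fresh_ok T.

End Mu.

Arguments FVar {Sigma}.
Arguments partial_tableau {Sigma St} trans T.
Arguments valid {Sigma St} trans V q.
Arguments node_at {Sigma St} t p.
Arguments root {Sigma St} t.
Arguments TNode {Sigma St} _ _ _.
Arguments TLeaf {Sigma St} _.
Arguments Seq {Sigma St} _ _ _.

(* Main.v *)
Require Import Defs.
From Stdlib Require Import List.
From Stdlib Require Import Setoid Lia Arith.
Import ListNotations.

Section Proofs.
Variable Sigma St : Type.
Variable trans : St -> Sigma -> St -> Prop.

Local Notation SEM := (sem Sigma St trans).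
Local Notation EXT := (ext Sigma St trans).

Lemma upd_same (r : valuation St) Z S : upd St r Z S Z = S.
Proof. unfold upd; rewrite Nat.eqb_refl; auto. Qed.

Lemma upd_other (r : valuation St) Z S Y : Y <> Z -> upd St r Z S Y = r Y.
Proof. unfold upd; intros H; apply Nat.eqb_neq in H; rewrite H; auto. Qed.

Lemma sem_free : forall (phi : form Sigma) (r r' : valuation St),
  (forall Y, free_in Sigma Y phi -> forall s, r Y s <-> r' Y s) ->
  forall s, SEM r phi s <-> SEM r' phi s.
Proof.
  induction phi; simpl; intros r r' H s0.
  - apply H; reflexivity.
  - pose proof (IHphi r r' H s0); tauto.
  - pose proof (IHphi1 r r' (fun Y h => H Y (or_introl h)) s0).
    pose proof (IHphi2 r r' (fun Y h => H Y (or_intror h)) s0); tauto.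
  - split; intros Hb t Ht; apply (IHphi r r' H t); auto.
  - split; intros [S' [Hs Hall]]; exists S'; split; auto; intros t Ht;
      apply (IHphi (upd St r v S') (upd St r' v S')); auto;
      intros Y HY s'; unfold upd; destruct (Nat.eqb_spec Y v); try tauto;
      apply H; split; auto.
Qed.

Lemma ext_notin : forall D V U, ~ In U (dom Sigma D) -> EXT V D U = V U.
Proof.
  unfold dom; induction D as [|[X Phi] D IH]; simpl; intros V U H; auto.
  rewrite IH; [|tauto]. apply upd_other. intro; apply H; auto.
Qed.

Lemma ext_app : forall D V U P Y,
  EXT V (D ++ [(U,P)]) Y = upd St (EXT V D) U (SEM (EXT V D) P) Y.
Proof.
  induction D as [|[X Phi] D IH]; simpl; intros; auto.
Qed.

Lemma lookup_in : forall D U Psi, lookup Sigma D U = Some Psi ->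
  In U (dom Sigma D) /\ In Psi (map snd D).
Proof.
  unfold dom; induction D as [|[X Phi] D IH]; simpl; intros U Psi H; [discriminate|].
  destruct (Nat.eqb_spec X U).
  - injection H as <-; auto.
  - destruct (IH _ _ H); auto.
Qed.

Lemma ext_lookup : forall D V U Psi, NoDup (dom Sigma D) ->
  (forall i j, i <= j -> j < length D ->
     ~ free_in Sigma (nth j (dom Sigma D) 0) (nth i (map snd D) (FVar 0))) ->
  lookup Sigma D U = Some Psi -> forall s, EXT V D U s <-> SEM (EXT V D) Psi s.
Proof.
  induction D as [|[X Phi] D IH]; simpl; intros V U Psi Hnd Hfr; [discriminate|].
  destruct (Nat.eqb_spec X U); intros Hl s.
  - subst X; injection Hl as <-. unfold dom in Hnd; simpl in Hnd; inversion Hnd; subst.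
    rewrite ext_notin by auto. rewrite upd_same.
    apply sem_free. intros Y HY s'.
    assert (HYU : Y <> U).
    { intro; subst. apply (Hfr 0 0); simpl; auto; lia. }
    assert (HYD : ~ In Y (map fst D)).
    { intro Hin. apply In_nth with (d := 0) in Hin. destruct Hin as [j [Hj Hj']].
      apply (Hfr 0 (S j)); [lia| |].
      - simpl. rewrite length_map in Hj. lia.
      - unfold dom; simpl. rewrite Hj'. exact HY. }
    rewrite ext_notin by auto. rewrite upd_other by auto. tauto.
  - apply IH; auto.
    + unfold dom in *; simpl in Hnd; inversion Hnd; auto.
    + intros i j Hij Hj. apply (Hfr (S i) (S j)); simpl; lia.
Qed.

Lemma bound_subst : forall (a : form Sigma) Z P U,
  bound_in Sigma U a -> bound_in Sigma U (subst Sigma a Z P).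
Proof.
  induction a; simpl; intros Z P U H; try solve [auto].
  - contradiction.
  - destruct H; [left|right]; auto.
  - destruct (Nat.eqb v Z); simpl; auto. destruct H; auto.
Qed.

Lemma sem_subst : forall (a : form Sigma) Z Psi r,
  (forall X, bound_in Sigma X a -> free_in Sigma X Psi -> X = Z) ->
  forall s, SEM r (subst Sigma a Z Psi) s <-> SEM (upd St r Z (SEM r Psi)) a s.
Proof.
  induction a; simpl; intros Z Psi r H x0.
  - unfold upd. destruct (Nat.eqb_spec v Z); simpl; tauto.
  - pose proof (IHa Z Psi r H x0); tauto.
  - pose proof (IHa1 Z Psi r (fun X h => H X (or_introl h)) x0).
    pose proof (IHa2 Z Psi r (fun X h => H X (or_intror h)) x0); tauto.
  - split; intros Hb t Ht; apply (IHa Z Psi r H t); auto.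
  - destruct (Nat.eqb_spec v Z).
    + subst v. apply (sem_free (FNu Sigma Z a)). intros Y [HY _] x0'.
      rewrite upd_other by congruence. tauto.
    + assert (Hpsi : forall S' x0', SEM (upd St r v S') Psi x0' <-> SEM r Psi x0').
      { intros S' x0'; apply sem_free; intros Y HY x0''.
        destruct (Nat.eqb_spec Y v).
        - subst Y. exfalso; apply n; apply H; auto.
        - rewrite upd_other by auto; tauto. }
      assert (Hsub : forall S' t, SEM (upd St r v S') (subst Sigma a Z Psi) t <->
                SEM (upd St (upd St r Z (SEM r Psi)) v S') a t).
      { intros S' t. rewrite IHa by (intros X h1 h2; apply H; auto).
        apply sem_free. intros Y _ x0'.
        destruct (Nat.eqb_spec Y Z).
        - subst Y. rewrite upd_same, upd_other, upd_same by auto. apply Hpsi.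
        - rewrite upd_other by auto.
          destruct (Nat.eqb_spec Y v).
          + subst Y; rewrite !upd_same; tauto.
          + rewrite !upd_other by auto; tauto. }
      simpl. split; intros [S' [Hs Hall]]; exists S'; split; auto;
        intros t Ht; apply Hsub; auto.
Qed.

Lemma sem_mono : forall (phi : form Sigma) b Z, sign_ok Sigma b Z phi ->
  forall r (X Y : set St), subset X Y -> forall s,
  (b = true -> SEM (upd St r Z X) phi s -> SEM (upd St r Z Y) phi s) /\
  (b = false -> SEM (upd St r Z Y) phi s -> SEM (upd St r Z X) phi s).
Proof.
  induction phi; simpl; intros b Z Hs r X Y HXY x0.
  - destruct (Nat.eqb_spec v Z).
    + subst v. rewrite !upd_same. split; intros; auto. specialize (Hs eq_refl); congruence.
    + rewrite !upd_other by auto. tauto.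
  - destruct (IHphi _ _ Hs r X Y HXY x0) as [H1 H2].
    destruct b; simpl in *; split; intros; try discriminate; intro; auto.
  - destruct Hs as [Hs1 Hs2].
    destruct (IHphi1 _ _ Hs1 r X Y HXY x0), (IHphi2 _ _ Hs2 r X Y HXY x0); tauto.
  - split; intros Hb Hx t Ht; apply (IHphi _ _ Hs r X Y HXY t); auto.
  - destruct (Nat.eqb_spec v Z).
    + subst v.
      assert (E : forall W, SEM (upd St r Z W) (FNu Sigma Z phi) x0 <-> SEM r (FNu Sigma Z phi) x0).
      { intro W; apply sem_free. intros Y0 [HY _] x0'. rewrite upd_other by congruence; tauto. }
      pose proof (E X); pose proof (E Y); tauto.
    + assert (E : forall W S' t, SEM (upd St (upd St r Z W) v S') phi t <->
                  SEM (upd St (upd St r v S') Z W) phi t).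
      { intros W S' t; apply sem_free; intros Y0 _ x0'.
        destruct (Nat.eqb_spec Y0 Z).
        - subst Y0. rewrite upd_other, upd_same, upd_same by auto. tauto.
        - rewrite (upd_other _ _ _ Y0 n0).
          destruct (Nat.eqb_spec Y0 v).
          + subst; rewrite !upd_same; tauto.
          + rewrite !upd_other by auto; tauto. }
      simpl. split; intros Hb [S' [Hs' Hall]]; exists S'; split; auto; intros t Ht;
        apply E; apply (IHphi _ _ Hs (upd St r v S') X Y HXY t); auto; apply E; auto.
Qed.

Lemma un_sound : forall D U Psi Z a V (S : set St), is_deflist Sigma D ->
  lookup Sigma D U = Some Psi -> is_sigma Sigma Psi Z a ->
  subset S (SEM (EXT V D) (subst Sigma a Z (FVar U))) -> subset S (EXT V D U).
Proof.
  intros D U Psi Z a V S [Hnd [Hbd [Hfr Hwf]]] Hl Hsig HS s Hs.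
  destruct (lookup_in _ _ _ Hl) as [HU HPsi].
  pose proof (Hbd _ _ HU HPsi) as HnbU. pose proof (Hwf _ HPsi) as Hw.
  pose proof (ext_lookup D V U Psi Hnd Hfr Hl) as HL.
  set (r := EXT V D) in *.
  apply HL.
  assert (HnbA : ~ bound_in Sigma U a).
  { intro Hb; apply HnbU. destruct Hsig; subst Psi; simpl; [right; auto|].
    unfold FMu; simpl. right. apply bound_subst; auto. }
  pose proof (HS s Hs) as H1.
  rewrite sem_subst in H1 by (intros X h1 h2; simpl in h2; subst; contradiction).
  simpl in H1.
  assert (H2 : SEM (upd St r Z (SEM r Psi)) a s).
  { revert H1; apply sem_free. intros Y _ s'. destruct (Nat.eqb_spec Y Z).
    - subst; rewrite !upd_same; symmetry; apply HL.
    - rewrite !upd_other by auto; tauto. }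
  clear H1.
  destruct Hsig as [-> | ->].
  - simpl in Hw. destruct Hw as [Hpos _].
    set (f := fun (W : set St) => SEM (upd St r Z W) a).
    assert (mon : forall W1 W2, subset W1 W2 -> subset (f W1) (f W2)).
    { intros W1 W2 HW t Ht. apply (proj1 (sem_mono a true Z Hpos r W1 W2 HW t)); auto. }
    set (G := SEM r (FNu Sigma Z a)).
    assert (HG : subset G (f G)).
    { intros t [S' [Ht Hall]]. apply (mon S'); [|exact (Hall t Ht)].
      intros u Hu. exists S'; split; auto. }
    exists (f G); split; auto.
    intros t Ht. exact (mon G (f G) HG t Ht).
  - unfold FMu in *. simpl in Hw. destruct Hw as [Hpos _].
    set (a' := subst Sigma a Z (FNeg Sigma (FVar Z))) in *.
    set (g := fun (W : set St) => SEM (upd St r Z W) (FNeg Sigma a')).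
    assert (mon : forall W1 W2, subset W1 W2 -> subset (g W1) (g W2)).
    { intros W1 W2 HW t Ht. apply (proj1 (sem_mono _ true Z Hpos r W1 W2 HW t)); auto. }
    set (G := SEM r (FNu Sigma Z (FNeg Sigma a'))).
    assert (HG : subset G (g G)).
    { intros t [S' [Ht Hall]]. apply (mon S'); [|exact (Hall t Ht)].
      intros u Hu. exists S'; split; auto. }
    simpl. intro HGs. change (G s) in HGs.
    apply HG in HGs. unfold g in HGs; simpl in HGs. apply HGs.
    unfold a'. rewrite sem_subst by (intros X _ h; simpl in h; auto).
    revert H2. apply sem_free. intros Y _ s'.
    destruct (Nat.eqb_spec Y Z).
    + subst; rewrite !upd_same. simpl. rewrite upd_same. unfold G. tauto.
    + rewrite !upd_other by auto; tauto.
Qed.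

Lemma rule_sound : forall V r q l, rule_inst Sigma St trans r q l ->
  is_sequent Sigma St q -> (forall c, In c l -> valid trans V c) -> valid trans V q.
Proof.
  intros V r q l Hr Hq Hc. unfold valid in *.
  destruct Hr; simpl in *.
  - pose proof (Hc _ (or_introl eq_refl)) as H1.
    pose proof (Hc _ (or_intror (or_introl eq_refl))) as H2. simpl in H1, H2.
    intros s Hs; split; [apply H1, H | apply H2, H0]; auto.
  - pose proof (Hc _ (or_introl eq_refl)) as H1.
    pose proof (Hc _ (or_intror (or_introl eq_refl))) as H2. simpl in H1, H2.
    intros s Hs. unfold FOr; simpl. intros [Ha Hb].
    destruct (proj1 (H s) Hs); [apply Ha, H1 | apply Hb, H2]; auto.
  - pose proof (Hc _ (or_introl eq_refl)) as H1. simpl in H1.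
    intros s Hs t Ht. apply H1, H. eauto.
  - pose proof (Hc _ (or_introl eq_refl)) as H1. simpl in H1.
    intros s Hs. unfold FDia; simpl. intro Hb.
    apply (Hb (f s)); auto. apply H1, H0. eauto.
  - pose proof (Hc _ (or_introl eq_refl)) as H1. simpl in H1.
    intros s Hs. pose proof (H1 s (proj2 (H0 s) Hs)) as H2.
    rewrite ext_app, upd_same in H2. exact H2.
  - pose proof (Hc _ (or_introl eq_refl)) as H2. simpl in H2.
    destruct Hq as [Hd _]. simpl in Hd.
    apply (un_sound D U Psi Z a V S Hd H H0).
    intros s Hs. apply H2, H1, Hs.
  - pose proof (Hc _ (or_introl eq_refl)) as H1. simpl in H1.
    intros s Hs; apply H1, H, Hs.
Qed.

Lemma node_ok : forall p (T n : tab Sigma St), tab_ok Sigma St trans T ->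
  node_at T p = Some n -> tab_ok Sigma St trans n.
Proof.
  induction p as [|i p IH]; simpl; intros T n HT Hn.
  - congruence.
  - destruct T as [q|q r cs]; [discriminate|].
    destruct (nth_error cs i) eqn:E; [|discriminate].
    inversion HT; subst. apply (IH t); auto.
    match goal with H : Forall _ _ |- _ => rewrite Forall_forall in H; apply H end.
    eapply nth_error_In; eauto.
Qed.

End Proofs.

Theorem lemma29 (Sigma St : Type) (trans : St -> Sigma -> St -> Prop)
  (V : valuation St) (T : tab Sigma St) (p : list nat)
  (q : sequent Sigma St) (r : rule St) (cs : list (tab Sigma St)) :
  partial_tableau trans T ->
  node_at T p = Some (TNode q r cs) ->
  (forall c, In c cs -> valid trans V (root c)) ->
  valid trans V q.
Proof.
  intros [Hok _] Hn Hc.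
  pose proof (node_ok Sigma St trans p T _ Hok Hn) as Hn'.
  inversion Hn'; subst.
  apply (rule_sound Sigma St trans V r q (map root cs)); auto.
  intros c Hin. apply in_map_iff in Hin. destruct Hin as [c' [<- Hc']]; auto.
Qed.
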